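(* Let $G$ be a finite simple connected graph with at least one edge and $s\ge 0$. The vanishing ideal of the $s$-order principal component of $G$ is the edge ideal of the graph $PC_s(G)$ whose vertex set is $\{x^{(i)} : x\in V(G),\ 0\le i\le s\}$ and whose edge set is $\{\{x^{(i)},y^{(j)}\} : \{x,y\}\in E(G),\ 0\le i,j\le s\}$.
   Context: $R=k[x_1,\dots,x_n]$ over an algebraically closed field $k$, vertices of $G$ identified with variables; $\mathcal{J}_s(R)=k[x_i^{(l)} : 1\le i\le n,\ 0\le l\le s]$. The edge ideal of a graph $H$ on variables is $\langle uv : \{u,v\}\in E(H)\rangle$. The $s$-order principal component of $G$: with $X=\mathcal{V}(I(G))$, jet scheme $\mathcal{J}_s(X)=\mathcal{V}(\mathcal{J}_s(I(G)))\subseteq\mathbb{A}^{n(s+1)}$ (where $\mathcal{J}_s(I)$ is generated by the coefficients of $t^0,\dots,t^s$ of the generators of $I$ after substituting $x_i\mapsto\sum_{l=0}^s x_i^{(l)}t^l$ modulo $t^{s+1}$), and projection $\pi_s$ to the order-$0$ coordinates, it is the Zariski closure of $\pi_s^{-1}(X_{smooth})$, $X_{smooth}$ being the smooth locus of $X$. *)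

(* Defs.v *)
From HB Require Import structures.
From mathcomp Require Import all_boot all_order all_algebra.
From mathcomp Require Import mpoly.
Set Implicit Arguments. Unset Strict Implicit. Unset Printing Implicit Defensive.
Import Order.TTheory GRing.Theory.
Local Open Scope ring_scope.

Section AffineGeometry.
Variables (k : closedFieldType) (m : nat).

Definition point := 'I_m -> k.
Definition aset := point -> Prop.

Definition zeros (S : {mpoly k[m]} -> Prop) : aset :=
  fun a => forall f, S f -> f.@[a] = 0.

Definition vanishing (X : aset) : {mpoly k[m]} -> Prop :=
  fun f => forall a, X a -> f.@[a] = 0.

Definition zariski_closure (X : aset) : aset := zeros (vanishing X).

Definition zclosed (Z : aset) : Prop :=
  exists S : {mpoly k[m]} -> Prop, forall a, Z a <-> zeros S a.

Definition subs (A B : aset) := forall a, A a -> B a.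
Definition psubs (A B : aset) := subs A B /\ exists a, B a /\ ~ A a.

Definition irreducible_closed (Z : aset) : Prop :=
  zclosed Z /\ (exists a, Z a) /\
  forall Z1 Z2, zclosed Z1 -> zclosed Z2 -> (forall a, Z a <-> Z1 a \/ Z2 a) ->
    subs Z Z1 \/ subs Z Z2.

Definition chain_at (X : aset) (p : point) (d : nat) (Z : nat -> aset) : Prop :=
  (forall i, (i <= d)%N -> irreducible_closed (Z i) /\ subs (Z i) X) /\
  (forall i, (i < d)%N -> psubs (Z i) (Z i.+1)) /\ Z d p.

(* local dimension of X at p (max dimension of the irreducible components
   through p) *)
Definition local_dim (X : aset) (p : point) (d : nat) : Prop :=
  (exists Z, chain_at X p d Z) /\
  (forall d' Z, chain_at X p d' Z -> (d' <= d)%N).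

Definition tangent_vec (X : aset) (p : point) (v : 'rV[k]_m) : Prop :=
  forall f, vanishing X f -> \sum_(i < m) (mderiv i f).@[p] * v 0 i = 0.

Definition tangent_dim (X : aset) (p : point) (d : nat) : Prop :=
  (exists B : 'M[k]_(d, m), row_free B /\ forall r, tangent_vec X p (row r B)) /\
  (forall B : 'M[k]_(d.+1, m), (forall r, tangent_vec X p (row r B)) -> ~~ row_free B).

Definition smooth_locus (X : aset) : aset :=
  fun p => X p /\ exists d, local_dim X p d /\ tangent_dim X p d.

Definition gen_ideal (S : {mpoly k[m]} -> Prop) (f : {mpoly k[m]}) : Prop :=
  exists r : seq ({mpoly k[m]} * {mpoly k[m]}),
    (forall q, q \in r -> S q.2) /\ f = \sum_(q <- r) q.1 * q.2.

End AffineGeometry.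

Definition simple_graph n (G : rel 'I_n) := ssrbool.symmetric G /\ irreflexive G.
Definition connected_graph n (G : rel 'I_n) := forall x y, connect G x y.

Section Jets.
Variables (k : closedFieldType) (n s : nat) (G : rel 'I_n).

(* jet variable x_i^(l), i < n, l <= s, in J_s(R) = k[x_i^(l)] *)
Definition jv (i : 'I_n) (l : 'I_s.+1) : 'I_(n * s.+1) := mxvec_index i l.

Definition edge_gens : {mpoly k[n]} -> Prop :=
  fun f => exists x y, G x y /\ f = 'X_x * 'X_y.

Definition XG : aset k n := zeros (gen_ideal edge_gens).

Definition xt (i : 'I_n) : {poly {mpoly k[n * s.+1]}} :=
  \poly_(l < s.+1) 'X_(jv i (inord l)).

(* generators of J_s(I(G)): coefficients of t^0..t^s of x(t) y(t) mod t^(s+1),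
   for the generators xy of I(G) *)
Definition jet_gens : {mpoly k[n * s.+1]} -> Prop :=
  fun f => exists x y (p : 'I_s.+1), G x y /\ f = (xt x * xt y)`_p.

Definition jet_scheme : aset k (n * s.+1) := zeros (gen_ideal jet_gens).

Definition pi_s (a : point k (n * s.+1)) : point k n := fun i => a (jv i ord0).

Definition principal_component : aset k (n * s.+1) :=
  zariski_closure (fun a => jet_scheme a /\ smooth_locus XG (pi_s a)).

Definition PC_edge_gens : {mpoly k[n * s.+1]} -> Prop :=
  fun f => exists x y (i j : 'I_s.+1), G x y /\ f = 'X_(jv x i) * 'X_(jv y j).

End Jets.

(* Main.v *)
Require Import Defs.
From HB Require Import structures.
From mathcomp Require Import all_boot all_order all_algebra.
From mathcomp Require Import mpoly.
From Stdlib Require Import Classical.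
Set Implicit Arguments. Unset Strict Implicit. Unset Printing Implicit Defensive.
Import Order.TTheory GRing.Theory.
Local Open Scope ring_scope.

Lemma poly_nonroot (k : closedFieldType) (p : {poly k}) :
  p != 0 -> exists t, p.[t] != 0.
Proof.
move=> pn0; apply: NNPP => H.
have allr : forall t, p.[t] = 0.
  move=> t; apply/eqP; apply: contraT => ht; exfalso; by apply: H; exists t.
set r := 'X * p + 1.
have sr : size r != 1%N.
  rewrite /r size_addl mulrC ?size_mulX //; last by rewrite size_polyC oner_neq0 ltnS lt0n size_poly_eq0.
  by rewrite eqSS size_poly_eq0.
have [x /rootP] := closed_rootP r sr.
by rewrite /r hornerD hornerM allr mulr0 add0r hornerC; move/eqP; rewrite oner_eq0.
Qed.

Lemma poly_nonroot_nz (k : closedFieldType) (p : {poly k}) :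
  p != 0 -> exists t, t != 0 /\ p.[t] != 0.
Proof.
move=> pn0; have: 'X * p != 0 by rewrite mulf_neq0 // polyX_eq0.
case/poly_nonroot=> t; rewrite hornerM hornerX mulf_eq0 negb_or => /andP[? ?].
by exists t.
Qed.

Section Aff.
Context (k : closedFieldType) (m : nat).
Local Notation P := {mpoly k[m]}.
Implicit Types (S : P -> Prop) (Z : aset k m).

Lemma gi_gen S g : S g -> gen_ideal S g.
Proof. by move=> Sg; exists [:: (1, g)]; split=> [q|]; rewrite ?inE ?big_seq1 ?mul1r // => /eqP->. Qed.

Lemma gi0 S : gen_ideal S 0.
Proof. by exists [::]; rewrite big_nil. Qed.

Lemma giD S f g : gen_ideal S f -> gen_ideal S g -> gen_ideal S (f + g).
Proof.
move=> [r1 [H1 ->]] [r2 [H2 ->]]; exists (r1 ++ r2); split; last by rewrite big_cat.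
by move=> q; rewrite mem_cat => /orP[/H1|/H2].
Qed.

Lemma giM S q f : gen_ideal S f -> gen_ideal S (q * f).
Proof.
move=> [r [H ->]]; exists (map (fun x => (q * x.1, x.2)) r); split.
  by move=> x /mapP[y /H ? ->].
by rewrite big_map mulr_sumr; apply: eq_bigr => x _; rewrite mulrA.
Qed.

Lemma gi_sum S (I : eqType) (r : seq I) (F : I -> P) :
  (forall i, i \in r -> gen_ideal S (F i)) -> gen_ideal S (\sum_(i <- r) F i).
Proof.
elim: r => [|x r IH] H; first by rewrite big_nil; apply: gi0.
rewrite big_cons; apply: giD; first by apply: H; rewrite inE eqxx.
by apply: IH => i ir; apply: H; rewrite inE ir orbT.
Qed.

Lemma gi_eval S f (a : 'I_m -> k) :
  (forall g, S g -> g.@[a] = 0) -> gen_ideal S f -> f.@[a] = 0.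
Proof.
move=> H [r [Hr ->]]; rewrite rmorph_sum /=; apply: big1_seq => q /andP[_ /Hr Sq].
by rewrite mevalM (H q.2) // mulr0.
Qed.

Lemma gi_zeros S (a : 'I_m -> k) g : zeros (gen_ideal S) a -> S g -> g.@[a] = 0.
Proof. by move=> H Sg; apply: H; apply: gi_gen. Qed.

Lemma zeros_gi S (a : 'I_m -> k) : (forall g, S g -> g.@[a] = 0) -> zeros (gen_ideal S) a.
Proof. by move=> H f; apply: gi_eval. Qed.

Lemma zclosed_zeros S : zclosed (zeros S).
Proof. by exists S. Qed.

Lemma closed_closure Z : zclosed Z -> forall a, zeros (vanishing Z) a -> Z a.
Proof.
move=> [S HS] a Ha; apply/HS => g Sg; apply: Ha => b /HS Hb; exact: Hb.
Qed.

Lemma closedU Z1 Z2 : zclosed Z1 -> zclosed Z2 -> zclosed (fun a => Z1 a \/ Z2 a).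
Proof.
move=> [S1 H1] [S2 H2].
exists (fun h => exists g1 g2, S1 g1 /\ S2 g2 /\ h = g1 * g2) => a; split.
  case=> [/H1 Ha|/H2 Ha] h [g1 [g2 [s1 [s2 ->]]]]; rewrite mevalM.
    by rewrite Ha // mul0r.
  by rewrite (Ha g2) // mulr0.
move=> Ha; apply: NNPP => /not_or_and [n1 n2].
have [g1 [s1 g1a]] : exists g1, S1 g1 /\ g1.@[a] != 0.
  apply: NNPP => H; apply: n1; apply/H1 => g sg; apply/eqP.
  by apply: contraT => ne; exfalso; apply: H; exists g.
have [g2 [s2 g2a]] : exists g2, S2 g2 /\ g2.@[a] != 0.
  apply: NNPP => H; apply: n2; apply/H2 => g sg; apply/eqP.
  by apply: contraT => ne; exfalso; apply: H; exists g.
have := Ha (g1 * g2); rewrite mevalM => /(_ (ex_intro _ g1 (ex_intro _ g2 (conj s1 (conj s2 erefl))))).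
by move/eqP; rewrite mulf_eq0 (negbTE g1a) (negbTE g2a).
Qed.

Lemma closedI Z1 Z2 : zclosed Z1 -> zclosed Z2 -> zclosed (fun a => Z1 a /\ Z2 a).
Proof.
move=> [S1 H1] [S2 H2]; exists (fun h => S1 h \/ S2 h) => a; split.
  by case=> /H1 A /H2 B h [/A|/B].
by move=> H; split; [apply/H1 => h s; apply: H; left | apply/H2 => h s; apply: H; right].
Qed.

End Aff.

Section Coord.
Context (k : closedFieldType) (m : nat).
Local Notation P := {mpoly k[m]}.
Implicit Types (S : P -> Prop) (Z : aset k m).

Lemma line_poly (f : P) (a1 a2 : 'I_m -> k) :
  exists q : {poly k}, forall t, q.[t] = f.@[fun i => a1 i + t * (a2 i - a1 i)].
Proof.
exists (mmap (@polyC k) (fun i => (a1 i)%:P + 'X * (a2 i - a1 i)%:P) f) => t.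
rewrite mevalE /mmap horner_sum; apply: eq_bigr => mo _.
rewrite hornerM hornerC /mmap1 horner_prod; congr (_ * _); apply: eq_bigr => i _.
by rewrite horner_exp hornerD hornerM hornerX !hornerC.
Qed.

Lemma nonzero_witness Z a : zclosed Z -> ~ Z a -> exists g, vanishing Z g /\ g.@[a] != 0.
Proof.
move=> [S HS] nZ; apply: NNPP => H; apply: nZ; apply/HS => g Sg.
apply/eqP; apply: contraT => ne; exfalso; apply: H; exists g; split => //.
by move=> b /HS; apply.
Qed.

Definition W (F : {set 'I_m}) : aset k m := fun a => forall i, i \notin F -> a i = 0.

Lemma W_closed F : zclosed (W F).
Proof.
exists (fun h => exists i, i \notin F /\ h = 'X_i) => a; split.
  by move=> Wa h [i [iF ->]]; rewrite mevalXU Wa.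
by move=> H i iF; rewrite -(mevalXU a i); apply: H; exists i.
Qed.

Lemma W_irr F : irreducible_closed (W F).
Proof.
split; first exact: W_closed.
split; first by exists (fun _ => 0).
move=> Z1 Z2 c1 c2 HU; apply: NNPP => /not_or_and [n1 n2].
have [a1 [Wa1 na1]] : exists a, W F a /\ ~ Z1 a.
  by apply: NNPP => H; apply: n1 => a Wa; apply: NNPP => nz; apply: H; exists a.
have [a2 [Wa2 na2]] : exists a, W F a /\ ~ Z2 a.
  by apply: NNPP => H; apply: n2 => a Wa; apply: NNPP => nz; apply: H; exists a.
have [g1 [v1 g1a]] := nonzero_witness c1 na1.
have [g2 [v2 g2a]] := nonzero_witness c2 na2.
have [q1 Hq1] := line_poly g1 a1 a2.
have [q2 Hq2] := line_poly g2 a1 a2.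
have q1n0 : q1 != 0.
  apply: contraNneq g1a => q0; move: (Hq1 0); rewrite q0 horner0 => ->.
  by apply/eqP; apply: meval_eq => i; rewrite mul0r addr0.
have q2n0 : q2 != 0.
  apply: contraNneq g2a => q0; move: (Hq2 1); rewrite q0 horner0 => ->.
  by apply/eqP; apply: meval_eq => i; rewrite mul1r addrC subrK.
have [t] := poly_nonroot (mulf_neq0 q1n0 q2n0).
rewrite hornerM Hq1 Hq2.
have WL : W F (fun i => a1 i + t * (a2 i - a1 i)).
  by move=> i iF; rewrite Wa1 // Wa2 // subrr mulr0 addr0.
by case/HU: WL => [/v1|/v2] ->; rewrite ?mul0r ?mulr0 eqxx.
Qed.

End Coord.

Section Ident.
Context (k : closedFieldType) (m : nat).
Local Notation P := {mpoly k[m]}.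

Lemma mcoeff_extract (f : P) (x : 'X_{1..m}) :
  \sum_(mo <- msupp f) f@_mo * (mo == x)%:R = f@_x.
Proof.
rewrite [in RHS](mpolyE f) raddf_sum /=; apply: eq_bigr => mo _.
by rewrite mcoeffZ mcoeffX.
Qed.

Definition fsl (f : P) (kk : 'I_m) (j : nat) : P :=
  \sum_(mo <- msupp f | mo kk == j) f@_mo *: 'X_[mo - U_(kk) *+ j]%MM.

Lemma fsl_coeff (f : P) kk j (mu : 'X_{1..m}) : mu kk = 0%N ->
  (fsl f kk j)@_mu = f@_(mu + U_(kk) *+ j)%MM.
Proof.
move=> mu0; rewrite /fsl raddf_sum /= -mcoeff_extract big_mkcond /=.
apply: eq_bigr => mo _; rewrite mcoeffZ mcoeffX.
case: eqP => [moj|mojn]; last first.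
  case: (eqVneq mo (mu + U_(kk) *+ j)%MM) => [E|_]; last by rewrite mulr0.
  exfalso; apply: mojn; rewrite E mnmDE mulmnE mnm1E eqxx mu0.
  by rewrite mul1n.
congr (_ * (nat_of_bool _)%:R); apply/idP/idP => /eqP E; apply/eqP.
  rewrite -E; apply/mnmP => i; rewrite mnmDE mnmBE mulmnE mnm1E.
  by case: eqP => [<-|]; rewrite ?mul1n ?mul0n ?subn0 ?addn0 // moj subnK.
by rewrite E addmK.
Qed.

Lemma fsl_supp (f : P) kk j (mu : 'X_{1..m}) : (fsl f kk j)@_mu != 0 ->
  exists2 mo, f@_mo != 0 & [/\ mo kk = j, mu kk = 0%N & mu = (mo - U_(kk) *+ j)%MM].
Proof.
rewrite /fsl raddf_sum /= => H; apply: NNPP => H2; move/eqP: H; apply.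
apply: big1_seq => mo /andP[/eqP moj mos]; rewrite mcoeffZ mcoeffX.
case: eqP => E; last by rewrite mulr0.
have fn0 : f@_mo != 0 by rewrite -mcoeff_msupp.
exfalso; apply: H2; exists mo => //; split => //.
by rewrite -E mnmBE mulmnE mnm1E eqxx mul1n moj subnn.
Qed.

Lemma fsl_decomp (f : P) kk :
  f = \sum_(j < msize f) fsl f kk j * 'X_kk ^+ j.
Proof.
under eq_bigr => j _ do rewrite /fsl mulr_suml.
rewrite (eq_bigr (fun j : 'I_(msize f) => \sum_(mo <- msupp f | mo kk == j) f@_mo *: 'X_[mo])); last first.
  move=> j _; apply: eq_bigr => mo /eqP moj.
  rewrite -scalerAl mpolyXn -mpolyXD submK //; apply/mnm_lepP => i.
  by rewrite mulmnE mnm1E; case: eqP => [<-|]; rewrite ?mul1n ?mul0n // moj.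
rewrite {1}(mpolyE f) (exchange_big_dep xpredT) //=; apply: eq_big_seq => mo mos.
have lt : (mo kk < msize f)%N.
  apply: leq_trans (msize_mdeg_lt mos); rewrite ltnS mdegE.
  by rewrite (bigD1 kk) //= leq_addr.
rewrite (big_pred1 (Ordinal lt)) // => j /=.
by rewrite eq_sym; apply/eqP/eqP => [E|->//]; apply: val_inj.
Qed.

Lemma fsl_eval (f : P) kk j (a b : 'I_m -> k) : (forall i, i != kk -> a i = b i) ->
  (fsl f kk j).@[a] = (fsl f kk j).@[b].
Proof.
move=> ab; rewrite /fsl !rmorph_sum /=; apply: eq_bigr => mo /eqP moj.
rewrite !mevalZ !mevalX; congr (_ * _); apply: eq_bigr => i _.
case: (eqVneq i kk) => [->|ik]; last by rewrite ab.
by rewrite mnmBE mulmnE mnm1E eqxx mul1n moj subnn !expr0.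
Qed.

Lemma T1 (F U : {set 'I_m}) (f : P) : U \subset F ->
  (forall a, W F a -> (forall u, u \in U -> a u != 0) -> f.@[a] = 0) ->
  forall mo : 'X_{1..m}, (forall i, i \notin F -> mo i = 0%N) -> f@_mo = 0.
Proof.
move=> UF.
pose D (a : 'I_m -> k) := W F a /\ (forall u, u \in U -> a u != 0).
suff Q : forall kn, forall g : P,
   (forall mo i, g@_mo != 0 -> i \in F -> (kn <= i)%N -> mo i = 0%N) ->
   (forall a, D a -> g.@[a] = 0) ->
   forall mo : 'X_{1..m}, (forall i, i \notin F -> mo i = 0%N) -> g@_mo = 0.
  move=> Hf mo Hmo; apply: (Q m) => //; first by move=> ? i _ _; rewrite leqNgt ltn_ord.
  by move=> a [Wa Ua]; apply: Hf.
elim=> [|kn IH] g Hg Hv mo Hmo.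
  case: (eqVneq mo 0%MM) => [->|mon0]; last first.
    apply: NNPP => /eqP gn0; move/negP: mon0; apply; apply/eqP/mnmP => i; rewrite mnm0E.
    case: (boolP (i \in F)) => iF; last by apply: Hmo.
    by apply: (Hg _ _ gn0 iF).
  pose a := fun i : 'I_m => if i \in F then (1 : k) else 0.
  have Da : D a.
    split; first by move=> i iF; rewrite /a (negbTE iF).
    by move=> u uU; rewrite /a (subsetP UF u uU) oner_neq0.
  rewrite -(Hv a Da) mevalE -mcoeff_extract; apply: eq_big_seq => mo' mo's.
  congr (_ * _); case: eqP => [->|ne].
    by rewrite big1 // => i _; rewrite mnm0E expr0.
  have gn0 : g@_mo' != 0 by rewrite -mcoeff_msupp.
  have [i moi] : exists i, mo' i != 0%N.
    apply: NNPP => H; apply: ne; apply/mnmP => i; rewrite mnm0E.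
    by apply/eqP; apply: NNPP => H2; apply: H; exists i; apply/negP.
  rewrite (bigD1 i) //=.
  case: (boolP (i \in F)) => iF; first by rewrite (Hg _ _ gn0 iF) in moi.
  by rewrite /a (negbTE iF) expr0n (negbTE moi) mul0r.
case: (ltnP kn m) => [knm|knm]; last first.
  apply: IH => // mo' i gn0 iF kni; apply: (Hg _ _ gn0 iF).
  by move: (ltn_ord i) => /leq_trans /(_ knm); rewrite ltnNge kni.
pose kk := Ordinal knm.
case: (boolP (kk \in F)) => kF; last first.
  apply: IH => // mo' i gn0 iF kni; apply: (Hg _ _ gn0 iF).
  rewrite ltn_neqAle kni andbT; apply: contraNneq kF => E.
  by have -> : kk = i by apply: val_inj; rewrite /= E.
apply: NNPP => /eqP gn0.
set j := mo kk.
have jlt : (j < msize g)%N.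
  have mos : mo \in msupp g by rewrite mcoeff_msupp.
  apply: leq_trans (msize_mdeg_lt mos); rewrite ltnS mdegE.
  by rewrite (bigD1 kk) //= leq_addr.
set mu := (mo - U_(kk) *+ j)%MM.
have mu0 : mu kk = 0%N by rewrite mnmBE mulmnE mnm1E eqxx mul1n subnn.
have mumo : (mu + U_(kk) *+ j)%MM = mo.
  rewrite submK //; apply/mnm_lepP => i.
  by rewrite mulmnE mnm1E; case: eqP => [<-|]; rewrite ?mul1n ?mul0n.
have: (fsl g kk j)@_mu = 0.
  apply: IH.
  - move=> mo' i /fsl_supp [mo'' g2 [m2j mo'0 ->]] iF kni.
    case: (eqVneq i kk) => [->|ik]; first by rewrite mnmBE mulmnE mnm1E eqxx mul1n m2j subnn.
    have kki : (kk == i) = false by rewrite eq_sym (negbTE ik).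
    rewrite mnmBE mulmnE mnm1E kki mul0n subn0.
    apply: (Hg _ _ g2 iF); rewrite ltn_neqAle kni andbT.
    by apply: contra_neq ik => E; apply: val_inj.
  - move=> a [Wa Ua].
    pose q : {poly k} := \poly_(j' < msize g) (fsl g kk j').@[a].
    suff q0 : q = 0.
      by move: (congr1 (fun p : {poly k} => p`_j) q0); rewrite coef_poly jlt coef0.
    apply: NNPP => /eqP qn0; have [t [tn0 qt]] := poly_nonroot_nz qn0.
    pose a' := fun i => if i == kk then t else a i.
    have Da' : D a'.
      split; first by move=> i iF; rewrite /a'; case: eqP => [E|_]; [by rewrite -E (negbTE iF) in kF | apply: Wa].
      by move=> u uU; rewrite /a'; case: (u == kk); [exact: tn0 | exact: Ua].
    move: qt; rewrite horner_poly.
    rewrite (eq_bigr (fun j' : 'I_(msize g) => (fsl g kk j').@[a'] * a' kk ^+ j')); last first.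
      move=> j' _; rewrite /a' eqxx; congr (_ * _); apply: fsl_eval => i ik.
      by rewrite (negbTE ik).
    have E : g.@[a'] = \sum_(j' < msize g) (fsl g kk j').@[a'] * a' kk ^+ j'.
      rewrite {1}(fsl_decomp g kk) rmorph_sum; apply: eq_bigr => j' _.
      by rewrite rmorphM rmorphXn /= mevalXU.
    by rewrite -E Hv // eqxx.
  - move=> i iF; rewrite mnmBE mulmnE mnm1E Hmo //.
by move=> /eqP; rewrite fsl_coeff // mumo (negbTE gn0).
Qed.

End Ident.

Section Krull.
Context (k : closedFieldType) (m : nat).
Local Notation P := {mpoly k[m]}.
Implicit Types (Z : aset k m).

Definition Bnd (D : nat) (p : P) := forall mo, p@_mo != 0 -> forall i, (mo i <= D)%N.

Definition Indep Z D (A : seq P) :=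
  (forall p, p \in A -> Bnd D p) /\
  forall al : nat -> k,
    (forall a, Z a -> \sum_(i < size A) al i * (nth 0 A i).@[a] = 0) ->
    forall i, (i < size A)%N -> al i = 0.

Lemma Bnd_mono D D' p : (D <= D')%N -> Bnd D p -> Bnd D' p.
Proof. by move=> le H mo /H Hm i; apply: leq_trans (Hm i) le. Qed.

Lemma Bnd_mul D1 D2 p q : Bnd D1 p -> Bnd D2 q -> Bnd (D1 + D2) (p * q).
Proof.
move=> H1 H2 mo; rewrite -mcoeff_msupp => /msuppM_le /allpairsP [[m1 m2] /= [i1 i2 ->]] i.
rewrite mnmDE leq_add //; [apply: H1 | apply: H2]; by rewrite -mcoeff_msupp.
Qed.

Lemma Bnd_msize p : Bnd (msize p) p.
Proof.
move=> mo; rewrite -mcoeff_msupp => /msize_mdeg_lt lt i.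
apply: (leq_trans _ (ltnW lt)); rewrite mdegE (bigD1 i) //=; exact: leq_addr.
Qed.

Lemma Bnd1 D : Bnd D 1.
Proof. by move=> mo; rewrite mcoeff1; case: (eqVneq mo 0%MM) => [-> _ i|_]; rewrite ?mnm0E ?eqxx. Qed.

Lemma Indep_step Z Z' L d (f : P) (A B : seq P) (a0 : 'I_m -> k) :
  subs Z Z' -> irreducible_closed Z' -> vanishing Z f -> Z' a0 -> f.@[a0] != 0 ->
  Bnd d f -> Indep Z L A -> Indep Z' L B -> Indep Z' (L + d) (A ++ map (fun q => f * q) B).
Proof.
move=> ZZ' [cZ' [_ irrZ']] vf Za0 fa0 Bf [BA IA] [BB IB]; split.
  move=> p; rewrite mem_cat => /orP[/BA|/mapP[q /BB Bq ->]].
    by apply: Bnd_mono; rewrite leq_addr.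
  by rewrite addnC; apply: Bnd_mul.
move=> al Hal.
have E (a : 'I_m -> k) : \sum_(i < size (A ++ map (fun q => f * q) B)) al i * (nth 0 (A ++ map (fun q => f * q) B) i).@[a]
  = \sum_(i < size A) al i * (nth 0 A i).@[a] +
    f.@[a] * (\sum_(j < size B) al (size A + j)%N * (nth 0 B j).@[a]).
  rewrite size_cat size_map big_split_ord /=; congr (_ + _).
    by apply: eq_bigr => i _; rewrite nth_cat ltn_ord.
  rewrite mulr_sumr; apply: eq_bigr => j _.
  rewrite nth_cat ltnNge leq_addr /= addKn (nth_map 0) // rmorphM /=.
  by rewrite mulrCA.
have HA : forall i, (i < size A)%N -> al i = 0.
  apply: IA => a Za; have := Hal a (ZZ' a Za).
  by rewrite E (vf a Za) mul0r addr0.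
pose g : P := \sum_(j < size B) al (size A + j)%N *: nth 0 B j.
have geval a : g.@[a] = \sum_(j < size B) al (size A + j)%N * (nth 0 B j).@[a].
  by rewrite /g rmorph_sum; apply: eq_bigr => j _; rewrite /= mevalZ.
have fg a : Z' a -> f.@[a] * g.@[a] = 0.
  move=> Za; move: (Hal a Za); rewrite E big1 ?add0r ?geval //.
  by move=> i _; rewrite HA // mul0r.
have HB : forall j, (j < size B)%N -> al (size A + j)%N = 0.
  apply: (IB (fun j => al (size A + j)%N)) => a Za; rewrite -geval.
  have c1 : zclosed (fun a => Z' a /\ zeros (fun h => h = f) a).
    by apply: closedI => //; apply: zclosed_zeros.
  have c2 : zclosed (fun a => Z' a /\ zeros (fun h => h = g) a).
    by apply: closedI => //; apply: zclosed_zeros.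
  have U : forall b, Z' b <-> (Z' b /\ zeros (fun h => h = f) b) \/ (Z' b /\ zeros (fun h => h = g) b).
    move=> b; split; last by case=> [[]|[]].
    move=> Zb; move/eqP: (fg b Zb); rewrite mulf_eq0 => /orP[/eqP H|/eqP H].
      by left; split=> // h ->.
    by right; split=> // h ->.
  case: (irrZ' _ _ c1 c2 U) => S.
    by have [_ /(_ f erefl) /eqP] := S a0 Za0; rewrite (negbTE fa0).
  by have [_ /(_ g erefl)] := S a Za.
move=> i; rewrite size_cat size_map => ilt.
case: (ltnP i (size A)) => [/HA //|ge].
by rewrite -(subnKC ge) HB // -(ltn_add2l (size A)) subnKC.
Qed.

Lemma Indep_iter Z Z' L d (f : P) (A : seq P) (a0 : 'I_m -> k) :
  subs Z Z' -> irreducible_closed Z' -> vanishing Z f -> Z' a0 -> f.@[a0] != 0 ->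
  Bnd d f -> Indep Z L A -> forall J, exists B, Indep Z' (L + J * d) B /\ size B = (J * size A)%N.
Proof.
move=> ZZ' irr vf Za0 fa0 Bf IA; elim=> [|J [B [IB sB]]].
  exists [::]; split=> //; split=> // al _ i; by rewrite ltn0.
have IA' : Indep Z (L + J * d) A.
  case: IA => BA IA; split=> // p /BA; apply: Bnd_mono; exact: leq_addr.
exists (A ++ map (fun q => f * q) B); split.
  by rewrite mulSn [(d + _)%N]addnC addnA; apply: (Indep_step ZZ' irr vf Za0 fa0 Bf IA' IB).
by rewrite size_cat size_map sB mulSn.
Qed.

End Krull.

Section Krull2.
Context (k : closedFieldType) (m : nat).
Local Notation P := {mpoly k[m]}.
Implicit Types (Z : aset k m).

Lemma vanish_W_coeffs (h : P) (F : {set 'I_m}) :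
  (forall mo : 'X_{1..m}, (forall i, i \notin F -> mo i = 0%N) -> h@_mo = 0) ->
  forall a, W F a -> h.@[a] = 0.
Proof.
move=> Hc a Wa; rewrite mevalE; apply: big1_seq => mo _.
case: (boolP [forall i, (i \notin F) ==> (mo i == 0%N)]) => [/forallP H|/forallPn [i]].
  by rewrite Hc ?mul0r // => i iF; apply/eqP; move: (H i); rewrite iF.
rewrite negb_imply => /andP[iF moi].
by rewrite (bigD1 i) //= Wa // expr0n (negbTE moi) mul0r mulr0.
Qed.

Lemma Indep_bound (F : {set 'I_m}) Z L (A : seq P) :
  subs Z (W F) -> Indep Z L A -> (size A <= L.+1 ^ #|F|)%N.
Proof.
move=> ZW [BA IA].
pose T := {x : 'I_m | x \in F}.
pose Ix : finType := {ffun T -> 'I_L.+1}.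
have cIx : #|{: Ix}| = (L.+1 ^ #|F|)%N.
  by rewrite card_ffun card_ord card_sig; congr (_ ^ _)%N; apply: eq_card.
pose mono_of (g : Ix) : 'X_{1..m} :=
  [multinom (if (insub i : option T) is Some x then nat_of_ord (g x) else 0%N) | i < m].
pose M := \matrix_(r < size A, c < #|Ix|) (nth 0 A r)@_(mono_of (enum_val c)).
rewrite -cIx leqNgt; apply/negP => lt.
have rk : (0 < \rank (kermx M))%N.
  by rewrite mxrank_ker subn_gt0; apply: leq_ltn_trans (rank_leq_col M) lt.
have [r rn0] : exists r, row r (kermx M) != 0.
  apply: NNPP => H; move: rk; rewrite lt0n mxrank_eq0 => /negP; apply.
  apply/eqP/row_matrixP => r; rewrite row0; apply/eqP.
  by apply: contraT => ne; exfalso; apply: H; exists r.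
set v := row r (kermx M) in rn0.
have vM : v *m M = 0 by apply/eqP; rewrite -sub_kermx row_sub.
have HIA := IA (fun i => v 0 (insubd r i)).
suff : forall i, (i < size A)%N -> v 0 (insubd r i) = 0.
  move=> H; move/negP: rn0; apply; apply/eqP/rowP => j.
  by move: (H j (ltn_ord j)); rewrite valKd => ->; rewrite mxE.
apply: HIA => a Za.
pose h : P := \sum_(i < size A) v 0 i *: nth 0 A i.
have -> : \sum_(i < size A) v 0 (insubd r i) * (nth 0 A i).@[a] = h.@[a].
  by rewrite /h rmorph_sum; apply: eq_bigr => i _; rewrite /= mevalZ valKd.
apply: (vanish_W_coeffs _ (ZW a Za)) => mo Hmo.
rewrite /h raddf_sum /=.
case: (boolP [forall i, mo i <= L]%N) => [/forallP Hle|/forallPn [i]].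
  pose g : Ix := [ffun x : T => inord (mo (val x))].
  have mg : mono_of g = mo.
    apply/mnmP => i; rewrite mnmE; case: insubP => [x iF vx|iF].
      by rewrite ffunE inordK ?ltnS ?Hle // vx.
    by rewrite Hmo.
  have E := congr1 (fun w : 'rV[k]_#|Ix| => w 0 (@enum_rank Ix g)) vM.
  rewrite /= !mxE in E; apply: etrans E.
  apply: eq_bigr => i _; rewrite mcoeffZ; congr (_ * _); rewrite /M mxE (@enum_rankK Ix) mg //.
rewrite -ltnNge => lti; apply: big1 => j _; rewrite mcoeffZ.
case: (eqVneq (nth 0 A j)@_mo 0) => [->|ne]; first by rewrite mulr0.
have : (mo i <= L)%N by apply: (BA _ (mem_nth 0 (ltn_ord j)) _ ne).
by rewrite leqNgt lti.
Qed.

Definition Gr Z e j := exists c, forall L A, Indep Z L A -> (size A * L.+1 ^ j <= c * L.+1 ^ e)%N.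

Lemma Gr_base F Z : subs Z (W F) -> Gr Z #|F| 0.
Proof. by move=> ZW; exists 1%N => L A IA; rewrite expn0 muln1 mul1n; apply: Indep_bound IA. Qed.

Lemma Gr_step Z Z' e j : zclosed Z -> psubs Z Z' -> irreducible_closed Z' -> Gr Z' e j -> Gr Z e j.+1.
Proof.
move=> cZ [ZZ' [a0 [Za0 nZa0]]] irr [c Hc].
have [f [vf fa0]] := nonzero_witness cZ nZa0.
set d := msize f.
exists (c * d.+1 ^ e)%N => L A IA.
have [B [IB sB]] := Indep_iter ZZ' irr vf Za0 fa0 (@Bnd_msize _ _ f) IA L.+1.
have H := Hc _ _ IB.
have E : (L + L.+1 * d).+1 = (L.+1 * d.+1)%N by rewrite mulnS addSn.
rewrite E sB !expnMn in H.
have e1 : (size A * L.+1 ^ j.+1 = L.+1 * size A * L.+1 ^ j)%N by rewrite expnS mulnCA mulnA.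
have e2 : (c * (L.+1 ^ e * d.+1 ^ e) = c * d.+1 ^ e * L.+1 ^ e)%N by rewrite [(L.+1 ^ e * _)%N]mulnC mulnA.
rewrite e1 -e2; apply: (leq_trans _ H); rewrite leq_mul2l; apply/orP; right.
by apply: leq_pmulr; rewrite expn_gt0.
Qed.

Lemma krull_bound (F : {set 'I_m}) d (Z : nat -> aset k m) :
  (forall i, (i <= d)%N -> irreducible_closed (Z i)) ->
  (forall i, (i < d)%N -> psubs (Z i) (Z i.+1)) ->
  subs (Z d) (W F) -> (d <= #|F|)%N.
Proof.
move=> Hirr Hps ZW.
have G : forall j, (j <= d)%N -> Gr (Z (d - j)%N) #|F| j.
  elim=> [_|j IH jd]; first by rewrite subn0; apply: Gr_base.
  have jd' : (d - j.+1 < d)%N by rewrite ltn_subrL; apply/andP; split; [|apply: leq_ltn_trans jd].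
  apply: Gr_step (IH (ltnW jd)).
  - by case: (Hirr (d - j.+1)%N (leq_subr _ _)).
  - by move: (Hps _ jd'); rewrite -subSn // subSS.
  - by apply: Hirr; apply: leq_subr.
have [c Hc] := G d (leqnn d); rewrite subnn in Hc.
have [_ [[a0 Za0] _]] := Hirr 0%N (leq0n d).
have I1 : forall L, Indep (Z 0%N) L [:: 1].
  move=> L; split; first by move=> p; rewrite inE => /eqP ->; apply: Bnd1.
  move=> al /(_ a0 Za0); rewrite big_ord1 /= meval1 mulr1 => H i.
  by rewrite ltnS leqn0 => /eqP ->.
have H := Hc c _ (I1 c); rewrite /= mul1n in H.
case: c H {Hc I1} => [|c] H; first by move: H; rewrite mul0n leqn0 expn_eq0.
have : (c.+2 ^ d < c.+2 ^ #|F|.+1)%N.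
  by apply: (leq_ltn_trans H); rewrite expnS ltn_mul2r; apply/andP; split; rewrite ?expn_gt0.
by rewrite ltn_exp2l.
Qed.

End Krull2.

Section Misc.
Context (k : closedFieldType) (m : nat).
Local Notation P := {mpoly k[m]}.
Implicit Types (Z : aset k m).

Lemma zclosed_ext Z Z' : (forall a, Z a <-> Z' a) -> zclosed Z -> zclosed Z'.
Proof. by move=> E [S HS]; exists S => a; rewrite -E. Qed.

Lemma irr_cover (I : finType) (Y : I -> aset k m) (Pr : pred I) Z :
  irreducible_closed Z -> (forall i, Pr i -> zclosed (Y i)) ->
  (forall a, Z a -> exists i, Pr i /\ Y i a) -> exists i, Pr i /\ subs Z (Y i).
Proof.
move=> [cZ [[a0 Za0] irr]] cY cov.
suff H : forall s : seq I, (forall a, Z a -> exists i, i \in s /\ Pr i /\ Y i a) ->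
    exists i, Pr i /\ subs Z (Y i).
  by apply: (H (enum I)) => a /cov [i [Pi Yi]]; exists i; rewrite mem_enum.
have cU : forall s : seq I, zclosed (fun a => exists i, i \in s /\ Pr i /\ Y i a).
  elim=> [|i s IH].
    exists (fun h => h = 1) => a; split; first by case=> i []; rewrite in_nil.
    by move/(_ 1 erefl)/eqP; rewrite meval1 oner_eq0.
  case: (boolP (Pr i)) => Pi.
    apply: (zclosed_ext (Z := fun a => Y i a \/ exists j, j \in s /\ Pr j /\ Y j a)).
      move=> a; split.
        by case=> [Yi|[j [js Hj]]]; [exists i; rewrite inE eqxx | exists j; rewrite inE js orbT].
      case=> j [/[!inE] /orP[/eqP->|js] [Pj Yj]]; [by left|by right; exists j].
    by apply: closedU => //; apply: cY.
  apply: (zclosed_ext _ IH) => a; split; first by case=> j [js Hj]; exists j; rewrite inE js orbT.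
  case=> j [/[!inE] /orP[/eqP->|js] [Pj Yj]]; [by rewrite Pj in Pi|by exists j].
elim=> [|i s IH] Hs; first by case: (Hs a0 Za0) => i []; rewrite in_nil.
case: (boolP (Pr i)) => Pi; last first.
  apply: IH => a /Hs [j [/[!inE] /orP[/eqP ->|js] Hj]]; first by case: Hj => Pj; rewrite Pj in Pi.
  by exists j.
have c1 : zclosed (fun a => Z a /\ Y i a) by apply: closedI => //; apply: cY.
have c2 : zclosed (fun a => Z a /\ exists j, j \in s /\ Pr j /\ Y j a) by apply: closedI.
have U : forall a, Z a <-> (Z a /\ Y i a) \/ (Z a /\ exists j, j \in s /\ Pr j /\ Y j a).
  move=> a; split; last by case=> [[]|[]].
  move=> Za; case: (Hs a Za) => j [/[!inE] /orP[/eqP ->|js] [Pj Yj]]; first by left.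
  by right; split=> //; exists j.
case: (irr _ _ c1 c2 U) => S.
  by exists i; split=> // a /S [].
apply: IH => a /S [_ H]; exact: H.
Qed.

Lemma gi_mono (S1 S2 : P -> Prop) f : (forall g, S1 g -> S2 g) -> gen_ideal S1 f -> gen_ideal S2 f.
Proof. by move=> H [r [Hr ->]]; exists r; split=> // q /Hr /H. Qed.

Lemma ideal_of_coeffs (E : 'I_m -> 'I_m -> Prop) (f : P) :
  (forall mo, f@_mo != 0 -> exists u v, [/\ E u v, u != v, (0 < mo u)%N & (0 < mo v)%N]) ->
  gen_ideal (fun g => exists u v, E u v /\ g = 'X_u * 'X_v) f.
Proof.
move=> H; rewrite (mpolyE f); apply: gi_sum => mo mos.
have [u [v [Euv uv mu mv]]] := H mo (eqbLR (mcoeff_msupp f mo) mos).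
have -> : 'X_[mo] = 'X_[mo - U_(u) - U_(v)]%MM * ('X_u * 'X_v) :> P.
  rewrite -!mpolyXD; congr 'X_[_]; apply/mnmP => i.
  rewrite !mnmDE !mnmBE !mnm1E.
  case: (eqVneq u i) => [<-|ui]; case: (eqVneq v u) => [vu|vu];
    rewrite ?vu ?eqxx in uv *; rewrite //=.
    by rewrite subn0 addn0 subnK.
  case: (eqVneq v i) => [<-|vi] /=; first by rewrite subn0 add0n subnK.
  by rewrite !subn0 !addn0.
rewrite scalerAl; apply: giM; apply: gi_gen; by exists u, v.
Qed.

Lemma unit_rows_free d (r : 'I_d -> 'I_m) : injective r ->
  row_free (\matrix_(i < d, j < m) ((j == r i)%:R : k)).
Proof.
move=> ri; set B := \matrix_(i, j) _.
have BB : B *m B^T = 1%:M.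
  apply/matrixP => i i'; rewrite !mxE (bigD1 (r i)) //= big1 ?addr0.
    rewrite !mxE eqxx mul1r; case: (eqVneq i i') => [<-|ne]; first by rewrite eqxx.
    by rewrite (inj_eq ri) (negbTE ne).
  by move=> j /negbTE jn; rewrite !mxE jn mul0r.
rewrite /row_free eqn_leq rank_leq_row /= -{1}(mxrank1 k d) -BB.
exact: mxrankM_maxl.
Qed.

Lemma rows_in_S_not_free (S : {set 'I_m}) (B : 'M[k]_(#|S|.+1, m)) :
  (forall r j, j \notin S -> B r j = 0) -> ~~ row_free B.
Proof.
move=> HB.
pose Pm := \matrix_(i < #|S|, j < m) ((j == enum_val i)%:R : k).
have E : B = B *m (Pm^T *m Pm).
  apply/matrixP => r j; rewrite mulmxA mxE.
  have BP : forall i, (B *m Pm^T) r i = B r (enum_val i).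
    move=> i; rewrite mxE (bigD1 (enum_val i)) //= big1 ?addr0.
      by rewrite !mxE eqxx mulr1.
    by move=> l /negbTE ln; rewrite !mxE ln mulr0.
  under eq_bigr => i _ do rewrite BP.
  case: (boolP (j \in S)) => jS; last first.
    rewrite HB // big1 // => i _; rewrite !mxE; case: eqP => [E|]; last by rewrite mulr0.
    by move: (enum_valP i); rewrite -E (negbTE jS).
  pose i0 := enum_rank_in jS j.
  have ej : enum_val i0 = j := enum_rankK_in jS jS.
  rewrite (bigD1 i0) //= big1 ?addr0.
    by rewrite mxE ej eqxx mulr1.
  move=> i ne; rewrite mxE; case: eqP => [E|]; last by rewrite mulr0.
  by move: ne; rewrite -ej in E; rewrite (enum_val_inj E) eqxx.
apply/negP => /eqP rk.
have : (\rank B <= #|S|)%N.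
  rewrite {1}E; apply: leq_trans (mxrankM_maxr _ _) _.
  apply: leq_trans (mxrankM_maxr _ _) _; exact: rank_leq_row.
by rewrite rk ltnn.
Qed.

Lemma mderivXU_eval (u x : 'I_m) (p : 'I_m -> k) :
  (mderiv u ('X_x : P)).@[p] = (x == u)%:R.
Proof.
rewrite mderivX mnm1E; case: (eqVneq x u) => [->|ne] /=.
  have -> : (U_(u) - U_(u) = 0)%MM by apply/mnmP => i; rewrite mnmBE subnn mnm0E.
  by rewrite scale1r mevalX big1 // => i _; rewrite mnm0E expr0.
by rewrite scale0r meval0.
Qed.

Lemma mderivXX_eval (u x y : 'I_m) (p : 'I_m -> k) :
  (mderiv u ('X_x * 'X_y : P)).@[p] = (x == u)%:R * p y + p x * (y == u)%:R.
Proof. by rewrite mderivM mevalD !mevalM !mderivXU_eval !mevalXU. Qed.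

End Misc.

Section Graph.
Context (k : closedFieldType) (n : nat) (G : rel 'I_n).
Context (Gsym : ssrbool.symmetric G) (Girr : irreflexive G).
Local Notation X := (@XG k n G).
Local Notation P := {mpoly k[n]}.

Definition indep (S : {set 'I_n}) := [forall x in S, forall y in S, ~~ G x y].
Definition supp (p : 'I_n -> k) := [set i | p i != 0].

Lemma indepP (S : {set 'I_n}) : reflect (forall x y, x \in S -> y \in S -> ~~ G x y) (indep S).
Proof.
apply: (iffP idP) => [H x y xS yS|H].
  by move/forall_inP: H => /(_ x xS) /forall_inP /(_ y yS).
by apply/forall_inP => x xS; apply/forall_inP => y yS; apply: H.
Qed.

Lemma XG_iff p : X p <-> forall x y, G x y -> p x * p y = 0.
Proof.
split=> [Xp x y Gxy|H].
  have := gi_zeros Xp (ex_intro _ x (ex_intro _ y (conj Gxy erefl))).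
  by rewrite mevalM !mevalXU.
apply: zeros_gi => g [x [y [Gxy ->]]]; rewrite mevalM !mevalXU; exact: H.
Qed.

Lemma notsupp p i : i \notin supp p -> p i = 0.
Proof. by rewrite inE negbK => /eqP. Qed.

Lemma XG_indep p : X p -> indep (supp p).
Proof.
move/XG_iff=> H; apply/indepP => x y; rewrite !inE => px py; apply/negP => Gxy.
by move: (H _ _ Gxy) => /eqP; rewrite mulf_eq0 (negbTE px) (negbTE py).
Qed.

Lemma W_sub_X S : indep S -> subs (@W k n S) X.
Proof.
move/indepP=> iS a Wa; apply/XG_iff => x y Gxy.
case: (boolP (x \in S)) => xS; last by rewrite Wa // mul0r.
case: (boolP (y \in S)) => yS; last by rewrite (Wa y) // mulr0.
by move: (iS _ _ xS yS); rewrite Gxy.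
Qed.

Lemma top_in_W Z p : irreducible_closed Z -> subs Z X -> Z p ->
  exists S', [/\ indep S', subs Z (@W k n S') & supp p \subset S'].
Proof.
move=> irr ZX Zp.
have [S' [iS' ZW]] := @irr_cover k n _ (@W k n) indep Z irr (fun S _ => @W_closed k n S)
   (fun a Za => ex_intro _ (supp a) (conj (XG_indep (ZX a Za)) (@notsupp a))).
exists S'; split=> //; apply/subsetP => i; rewrite inE => pi.
by apply: contraR pi => iS; rewrite (ZW p Zp i iS).
Qed.

Lemma chain_bound p d Zc : chain_at X p d Zc ->
  exists S', [/\ indep S', supp p \subset S' & (d <= #|S'|)%N].
Proof.
move=> [Hi [Hps Zd]].
have [irr ZX] := Hi d (leqnn d).
have [S' [iS' ZW sS']] := top_in_W irr ZX Zd.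
exists S'; split=> //; apply: (krull_bound (Z := Zc)) => // i id.
by case: (Hi i id).
Qed.

Lemma vanish_X_ideal f : vanishing X f -> gen_ideal (edge_gens G) f.
Proof.
move=> vf; apply: gi_mono (ideal_of_coeffs (E := fun x y => G x y) _) => // mo fmo.
apply: NNPP => Hno.
pose S0 := [set i | mo i != 0%N].
have iS0 : indep S0.
  apply/indepP => x y; rewrite !inE => mx my; apply/negP => Gxy; apply: Hno.
  exists x, y; split; rewrite ?lt0n //.
  by apply: contraTneq Gxy => ->; rewrite Girr.
move/eqP: fmo; apply; apply: (@T1 k n S0 set0) => //; first exact: sub0set.
  by move=> a Wa _; apply: vf; apply: W_sub_X Wa.
by move=> i; rewrite inE negbK => /eqP.
Qed.

Lemma tangent_unit p u (v : 'rV[k]_n) : X p -> (forall w, w \in supp p -> ~~ G u w) ->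
  (forall i, v 0 i = (i == u)%:R) -> tangent_vec X p v.
Proof.
move=> Xp Hu Hv f vf.
rewrite (bigD1 u) //= big1 ?addr0; last by move=> i /negbTE iu; rewrite Hv iu mulr0.
rewrite Hv eqxx mulr1.
have [r [Hr ->]] := vanish_X_ideal vf.
rewrite (raddf_sum (mderiv u)) rmorph_sum /=; apply: big1_seq => q /andP[_ /Hr [x [y [Gxy ->]]]].
have pxy : p x * p y = 0 by move/XG_iff: Xp; apply.
rewrite mderivM /= rmorphD /= mevalM [X in _ * X]mevalM !mevalXU pxy mulr0 add0r.
rewrite mevalM mderivXX_eval.
have py : x = u -> p y = 0.
  move=> xu; apply: notsupp; apply/negP => ys; move: (Hu y ys); rewrite -xu Gxy //.
have px : y = u -> p x = 0.
  move=> yu; apply: notsupp; apply/negP => xs; move: (Hu x xs); rewrite -yu Gsym Gxy //.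
case: (eqVneq x u) => [xu|xu]; case: (eqVneq y u) => [yu|yu].
- by move: Gxy; rewrite xu yu Girr.
- by rewrite (py xu) /= !(mulr0n, mulr0, mul0r, addr0).
- by rewrite (px yu) /= !(mulr0n, mulr0, mul0r, addr0).
- by rewrite /= !(mulr0n, mulr0, mul0r, addr0).
Qed.

End Graph.

Section Graph2.
Context (k : closedFieldType) (n : nat) (G : rel 'I_n).
Context (Gsym : ssrbool.symmetric G) (Girr : irreflexive G).
Local Notation X := (@XG k n G).
Local Notation P := {mpoly k[n]}.

Lemma unit_row_tangent p d (r : 'I_d -> 'I_n) (i : 'I_d) :
  X p -> (forall w, w \in supp p -> ~~ G (r i) w) ->
  tangent_vec X p (row i (\matrix_(i < d, j < n) ((j == r i)%:R : k))).
Proof.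
move=> Xp H; apply: (tangent_unit Gsym Girr Xp H) => j.
by rewrite !mxE.
Qed.

Lemma smooth_T p : smooth_locus X p -> indep G [set u | [forall w in supp p, ~~ G u w]].
Proof.
move=> [Xp [d [[[Zc ch] _] [_ td2]]]].
set T := [set u | _].
have [S' [iS' sS' dS']] := chain_bound ch.
have S'T : S' \subset T.
  apply/subsetP => u uS'; rewrite inE; apply/forall_inP => w wp.
  by move/indepP: iS'; apply => //; apply: (subsetP sS').
have Td : (#|T| <= d)%N.
  rewrite leqNgt; apply/negP => lt.
  pose r (i : 'I_d.+1) : 'I_n := enum_val (widen_ord lt i).
  have ri : injective r by move=> i j /enum_val_inj /(congr1 val) /= E; apply: val_inj.
  have tB : forall i, tangent_vec X p (row i (\matrix_(i < d.+1, j < n) ((j == r i)%:R : k))).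
    move=> i; apply: unit_row_tangent => // w wp.
    have := enum_valP (widen_ord lt i); rewrite inE => /forall_inP.
    by apply.
  by move/negP: (td2 _ tB); apply; apply: unit_rows_free.
have : S' == T by rewrite eqEcard S'T /=; apply: leq_trans Td dS'.
by move/eqP <-.
Qed.

Lemma smooth_of_max p (S : {set 'I_n}) : indep G S ->
  (forall v, v \notin S -> exists2 w, w \in S & G v w) -> supp p = S ->
  smooth_locus X p.
Proof.
move=> iS mS sp.
have pS : forall i, i \notin S -> p i = 0 by move=> i; rewrite -sp; apply: notsupp.
have pS' : forall i, i \in S -> p i != 0 by move=> i; rewrite -sp inE.
have Xp : X p.
  apply/XG_iff => x y Gxy.
  case: (boolP (x \in S)) => xS; last by rewrite pS // mul0r.
  case: (boolP (y \in S)) => yS; last by rewrite (pS y) // mulr0.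
  by move/indepP: iS => /(_ x y xS yS); rewrite Gxy.
split=> //; exists #|S|; split; split.
- pose Sc (i : nat) := [set x in S | (index x (enum S) < i)%N].
  exists (fun i => @W k n (Sc i)); split; [|split].
  + move=> i _; split; first exact: W_irr.
    apply: W_sub_X; apply/indepP => x y; rewrite !inE => /andP[xS _] /andP[yS _].
    by move/indepP: iS; apply.
  + move=> i ilt; split.
      move=> a Wa x; rewrite !inE => H; apply: Wa; rewrite inE.
      apply: contra H => /andP[-> /= lt]; exact: ltnW.
    have ilt' : (i < size (enum S))%N by rewrite -cardE.
    set x := nth (enum_val (Ordinal ilt)) (enum S) i.
    have xS : x \in S by rewrite -mem_enum mem_nth.
    have ix : index x (enum S) = i by rewrite index_uniq // enum_uniq.
    exists (fun j => (j == x)%:R); split.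
      move=> j; rewrite inE negb_and => /orP[jS|]; first by case: eqP => // E; rewrite E xS in jS.
      by rewrite -ltnNge => lt; case: eqP => // E; move: lt; rewrite E ix ltnn.
    move/(_ x); rewrite inE xS ix ltnn /= eqxx => /(_ isT) /eqP; by rewrite oner_eq0.
  + move=> i; rewrite inE negb_and => /orP[/pS //|].
    case: (boolP (i \in S)) => iS'; last by rewrite pS.
    by rewrite -ltnNge cardE ltnS leqNgt index_mem mem_enum iS'.
- move=> d' Zc ch; have [S' [iS' sS' dS']] := chain_bound ch.
  apply: leq_trans dS' _; apply: subset_leq_card; apply/subsetP => v vS'.
  apply: contraT => vS; have [w wS Gvw] := mS v vS.
  have wS' : w \in S' by apply: (subsetP sS'); rewrite sp.
  by move/indepP: iS' => /(_ v w vS' wS'); rewrite Gvw.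
- exists (\matrix_(i < #|S|, j < n) ((j == enum_val i)%:R : k)); split.
    exact: unit_rows_free (@enum_val_inj _ _).
  move=> i; apply: unit_row_tangent => // w; rewrite sp => wS.
  by move/indepP: iS; apply => //; apply: enum_valP.
- move=> B tB; apply: rows_in_S_not_free => r j jS.
  have [w wS Gjw] := mS j jS.
  have vf : vanishing X ('X_w * 'X_j : P).
    by move=> a /XG_iff H; rewrite mevalM !mevalXU; apply: H; rewrite Gsym.
  have := tB r _ vf.
  rewrite (bigD1 j) //= big1 ?addr0.
    rewrite mderivXX_eval (pS j) // eqxx mulr0 add0r mulr1 mxE => /eqP.
    by rewrite mulf_eq0 (negbTE (pS' w wS)) => /eqP.
  move=> i /negbTE ji; rewrite mderivXX_eval (pS j) // mulr0 add0r.
  by rewrite eq_sym ji mulr0 mul0r.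
Qed.

End Graph2.

Section JetsProof.
Context (k : closedFieldType) (n s : nat) (G : rel 'I_n).
Context (Gsym : ssrbool.symmetric G) (Girr : irreflexive G).
Local Notation X := (@XG k n G).
Local Notation PJ := {mpoly k[n * s.+1]}.

Lemma jv_inj (x y : 'I_n) (i j : 'I_s.+1) : jv x i = jv y j -> x = y /\ i = j.
Proof.
move=> E; have := congr1 (fun u => enum_val (cast_ord (esym (mxvec_cast n s.+1)) u)) E.
by rewrite /jv /mxvec_index !cast_ordK !enum_rankK => -[-> ->].
Qed.

Lemma jv_surj (u : 'I_(n * s.+1)) : exists x i, u = jv x i.
Proof. by case/mxvec_indexP: u => x i; exists x, i. Qed.

Lemma xt_coef (x : 'I_n) (j : nat) : (j < s.+1)%N -> (xt k s x)`_j = 'X_(jv x (inord j)).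
Proof. by move=> lt; rewrite coef_poly lt. Qed.

Lemma jet_coef_eval (a : 'I_(n * s.+1) -> k) (x y : 'I_n) (l : nat) : (l < s.+1)%N ->
  ((xt k s x * xt k s y)`_l).@[a] =
  \sum_(j < l.+1) a (jv x (inord j)) * a (jv y (inord (l - j))).
Proof.
move=> hl; rewrite coefM rmorph_sum; apply: eq_bigr => j _.
rewrite /= mevalM !xt_coef ?mevalXU //.
  by apply: leq_ltn_trans hl; rewrite leq_subr.
by apply: leq_ltn_trans hl; rewrite -ltnS.
Qed.

Lemma jet_zero (a : 'I_(n * s.+1) -> k) (w x : 'I_n) :
  jet_scheme G a -> G w x -> a (jv w ord0) != 0 -> forall i, a (jv x i) = 0.
Proof.
move=> J Gwx aw0.
suff H : forall l, (l < s.+1)%N -> a (jv x (inord l)) = 0.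
  by move=> i; rewrite -(H i (ltn_ord i)) inord_val.
elim/ltn_ind => l IH hl.
have := gi_zeros J (ex_intro _ w (ex_intro _ x (ex_intro _ (inord l) (conj Gwx erefl)))).
rewrite jet_coef_eval ?inordK // big_ord_recl big1 ?addr0.
  have -> : inord 0 = ord0 :> 'I_s.+1 by apply: val_inj; rewrite /= inordK.
  by rewrite subn0 => /eqP; rewrite mulf_eq0 (negbTE aw0) => /eqP.
move=> j _; rewrite IH ?mulr0 //.
  by rewrite lift0 ltn_subrL /= (leq_ltn_trans (leq0n j) (ltn_ord j)).
by apply: leq_ltn_trans hl; apply: leq_subr.
Qed.


Lemma PC_vanish (a : 'I_(n * s.+1) -> k) :
  jet_scheme G a -> smooth_locus X (pi_s a) -> forall g, PC_edge_gens G g -> g.@[a] = 0.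
Proof.
move=> J sm g [x [y [i [j [Gxy ->]]]]].
have iT := smooth_T Gsym Girr sm.
set p := pi_s a in iT.
rewrite mevalM !mevalXU.
have [xT|xT] := boolP (x \in [set u | [forall w in supp p, ~~ G u w]]); last first.
  move: xT; rewrite inE => /forall_inPn [w wp /negbNE Gxw].
  rewrite (jet_zero J (w := w)) ?mul0r //; first by rewrite Gsym.
  by move: wp; rewrite inE.
have [yT|yT] := boolP (y \in [set u | [forall w in supp p, ~~ G u w]]); last first.
  move: yT; rewrite inE => /forall_inPn [w wp /negbNE Gyw].
  rewrite [a (jv y j)](jet_zero J (w := w)) ?mulr0 //; first by rewrite Gsym.
  by move: wp; rewrite inE.
by move/indepP: iT => /(_ x y xT yT); rewrite Gxy.
Qed.

Lemma A_point (S : {set 'I_n}) (a : 'I_(n * s.+1) -> k) : indep G S ->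
  (forall v, v \notin S -> exists2 w, w \in S & G v w) ->
  (forall x i, x \notin S -> a (jv x i) = 0) -> (forall x, x \in S -> a (jv x ord0) != 0) ->
  jet_scheme G a /\ smooth_locus X (pi_s a).
Proof.
move=> iS mS a0 a1; split.
  apply: zeros_gi => g [x [y [l [Gxy ->]]]].
  rewrite jet_coef_eval //; apply: big1 => j _.
  case: (boolP (x \in S)) => xS; last by rewrite a0 // mul0r.
  case: (boolP (y \in S)) => yS; last by rewrite (a0 y) // mulr0.
  by move/indepP: iS => /(_ x y xS yS); rewrite Gxy.
apply: (smooth_of_max Gsym Girr iS mS); apply/setP => x; rewrite inE /pi_s.
case: (boolP (x \in S)) => xS; first by rewrite a1.
by rewrite a0 // eqxx.
Qed.

Lemma max_ext (V0 : {set 'I_n}) : indep G V0 ->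
  exists S, [/\ indep G S, V0 \subset S & forall v, v \notin S -> exists2 w, w \in S & G v w].
Proof.
move=> iV0.
have P0 : indep G V0 && (V0 \subset V0) by rewrite iV0 subxx.
case: (@arg_maxnP _ V0 (fun S => indep G S && (V0 \subset S)) (fun S => #|S|) P0) => S /andP[iS VS] Smax.
exists S; split=> // v vS; apply: NNPP => H.
have iS' : indep G (v |: S).
  apply/indepP => x y; rewrite !inE => /orP[/eqP->|xS] /orP[/eqP->|yS].
  - by rewrite Girr.
  - by apply/negP => Gvy; apply: H; exists y.
  - by apply/negP => Gxv; apply: H; exists x; rewrite // Gsym.
  - by move/indepP: iS; apply.
have := Smax (v |: S); rewrite iS' (subset_trans VS (subsetUr _ _)) => /(_ isT).
by rewrite cardsU1 vS /geq /= ltnn.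
Qed.

End JetsProof.

Theorem mainTheorem8 (k : closedFieldType) (n s : nat) (G : rel 'I_n) :
  simple_graph G -> connected_graph G -> (exists x y, G x y) ->
  forall f : {mpoly k[n * s.+1]},
    vanishing (@principal_component k n s G) f <-> gen_ideal (@PC_edge_gens k n s G) f.
Proof.
move=> [Gsym Girr] _ _ f.
pose A := fun a : 'I_(n * s.+1) -> k => @jet_scheme k n s G a /\ smooth_locus (@XG k n G) (pi_s a).
split; last first.
  move=> gf a Ha; apply: Ha => b [Jb Sb]; apply: gi_eval gf => g; exact: PC_vanish.
move=> vf.
have vA : forall b, A b -> f.@[b] = 0.
  by move=> b Ab; apply: vf => g vg; apply: vg.
apply: gi_mono (ideal_of_coeffs (E := fun u v => exists x y (i j : 'I_s.+1),
   [/\ G x y, u = jv x i & v = jv y j]) _).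
  by move=> g [u [v [[x [y [i [j [Gxy -> ->]]]]] ->]]]; exists x, y, i, j.
move=> mo fmo; apply: NNPP => Hno.
pose V0 := [set x | [exists i, mo (jv x i) != 0%N]].
have iV0 : indep G V0.
  apply/indepP => x y; rewrite !inE => /existsP[i mi] /existsP[j mj]; apply/negP => Gxy.
  apply: Hno; exists (jv x i), (jv y j); split; rewrite ?lt0n //.
    by exists x, y, i, j.
  apply/negP => /eqP /jv_inj [xy _]; by move: Gxy; rewrite xy Girr.
have [S [iS VS mS]] := max_ext Gsym Girr iV0.
pose F := [set u : 'I_(n * s.+1) | [exists x in S, exists i : 'I_s.+1, u == jv x i]].
pose U := [set u : 'I_(n * s.+1) | [exists x in S, u == jv x (ord0 : 'I_s.+1)]].
have UF : U \subset F.
  apply/subsetP => u; rewrite !inE => /exists_inP [x xS /eqP ->].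
  by apply/exists_inP; exists x => //; apply/existsP; exists ord0.
move/eqP: fmo; apply; apply: (@T1 k (n * s.+1) F U f UF).
  move=> a Wa Ua; apply: vA; apply: (A_point Gsym Girr iS mS).
    move=> x i xS; apply: Wa; rewrite inE; apply/negP => /exists_inP [x' x'S /existsP [i' /eqP E]].
    by have [xx _] := jv_inj E; rewrite xx x'S in xS.
  move=> x xS; apply: Ua; rewrite inE; by apply/exists_inP; exists x.
move=> u uF; apply/eqP; move: uF; apply: contraNT => mu.
have [x [i E]] := jv_surj u; rewrite E in mu *.
have xV : x \in V0 by rewrite inE; apply/existsP; exists i.
rewrite inE; apply/exists_inP; exists x; first exact: (subsetP VS).
by apply/existsP; exists i.
Qed.
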